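(* Let $\mathcal C$ be a Markov category with conditionals and precise supports, in which there exist a state $\mu$ and a deterministic state $o$ with $o\not\ll\mu$. Then the states $I\leadsto X$ of $\mathrm{Cond}(\mathcal C)$ are as follows: (1) all $(K,\psi,o)$ with $o\not\ll\psi_K$ are equal in $\mathrm{Cond}(\mathcal C)$, defining a unique failure state $\bot_X$; (2) if $o\ll\psi_K$, then $(K,\psi,o)=J(\psi|_K\,o)$ in $\mathrm{Cond}(\mathcal C)$, where $\psi|_K:K\to X$ is any conditional of $\psi$ with respect to $K$; (3) failure is strict: any composite with, or tensor with, a failure state is a failure state; (4) the only morphisms $I\leadsto I$ in $\mathrm{Cond}(\mathcal C)$ are $\mathrm{Id}_I$ and $\bot_I$; both are copyable, but $\bot_I$ is not discardable.
   Context: A Markov category is a symmetric monoidal category $(\mathcal C,\otimes,I)$ (assumed strict) in which every object $X$ carries a commutative comonoid $\mathrm{copy}_X$, $\mathrm{del}_X$ compatible with $\otimes$, and $I$ is terminal. A morphism $f$ is deterministic if $\mathrm{copy}_Y f=(f\otimes f)\mathrm{copy}_X$ (in a CD category, copyable means this equation and discardable means $\mathrm{del}_Y f=\mathrm{del}_X$). $\langle f,g\rangle=(f\otimes g)\mathrm{copy}_A$; marginals $f_X=(\mathrm{id}_X\otimes\mathrm{del}_Y)f$, $f_Y=(\mathrm{del}_X\otimes\mathrm{id}_Y)f$. A conditional of $f:A\to X\otimes Y$ w.r.t. $X$ is $f|_X:X\otimes A\to Y$ with $f=(\mathrm{id}_X\otimes f|_X)(\mathrm{copy}_X\otimes\mathrm{id}_A)(f_X\otimes\mathrm{id}_A)\mathrm{copy}_A$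 (symmetrically w.r.t. $Y$); $\mathcal C$ has conditionals if these always exist. $f=_\mu g$ means $\langle\mathrm{id},f\rangle\mu=\langle\mathrm{id},g\rangle\mu$; $\mu\ll\nu$ means $f=_\nu g\Rightarrow f=_\mu g$ for all $f,g$. Precise supports: for deterministic $x:I\to X$, $y:I\to Y$, any $f:X\to Y$, $\mu:I\to X$: $x\otimes y\ll\langle\mathrm{id}_X,f\rangle\mu$ iff ($x\ll\mu$ and $y\ll fx$). $\mathrm{Obs}(\mathcal C)$: same objects as $\mathcal C$; morphisms $X\leadsto Y$ are triples $(K,f,o)$, $f:X\to Y\otimes K$, $o:I\to K$ deterministic; identity $\mathrm{Id}_X=(I,\mathrm{id}_X,\mathrm{id}_I)$; composition $(K',f',o')\bullet(K,f,o)=(K'\otimes K,(f'\otimes\mathrm{id}_K)f,o'\otimes o)$; tensor of $(K,f,o):X\leadsto Y$, $(K',f',o'):X'\leadsto Y'$ is $(K'\otimes K,(\mathrm{id}_{Y'}\otimes\mathrm{swap}_{K',Y}\otimes\mathrm{id}_K)(f'\otimes f),o'\otimes o)$; $J(f)=(I,f,\mathrm{id}_I)$; copy and delete of $\mathrm{Obs}(\mathcal C)$ are $J(\mathrm{copy}_X)$, $J(\mathrm{del}_X)$. For states $(K,\psi,o),(K',\psi',o'):I\leadsto X$, $(K,\psi,o)\sim(K',\psi',o')$ iff either ($o\ll\psi_K$, $o'\ll\psi'_{K'}$ and $\psi|_Ko=\psi'|_{K'}o'$) or ($o\not\ll\psi_K$ and $o'\not\ll\psi'_{K'}$). For $F,G:X\leadsto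 Y$, $F\approx G$ iff for every $A$ and every state $\Psi:I\leadsto A\otimes X$, $(\mathrm{Id}_A\otimes F)\bullet\Psi\sim(\mathrm{Id}_A\otimes G)\bullet\Psi$. $\mathrm{Cond}(\mathcal C)=\mathrm{Obs}(\mathcal C)/{\approx}$, a CD category. *)

(* Defs.v *)
Set Implicit Arguments.
Unset Strict Implicit.

Record Cat := {
  ob :> Type;
  hom : ob -> ob -> Type;
  idm : forall a, hom a a;
  comp : forall a b c, hom b c -> hom a b -> hom a c;
  comp_assoc : forall a b c d (f : hom a b) (g : hom b c) (h : hom c d),
    comp h (comp g f) = comp (comp h g) f;
  comp_idl : forall a b (f : hom a b), comp (idm b) f = f;
  comp_idr : forall a b (f : hom a b), comp f (idm a) = f }.

Arguments hom {_} _ _.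
Arguments idm {_} _.
Arguments comp {_ _ _ _} _ _.
Notation "g ∘ f" := (comp g f) (at level 40, left associativity).

Record SMC := {
  smc_cat :> Cat;
  tens : smc_cat -> smc_cat -> smc_cat;
  tensm : forall a b c d : smc_cat, hom a b -> hom c d -> hom (tens a c) (tens b d);
  tunit : smc_cat;
  tensm_id : forall a b : smc_cat, tensm (idm a) (idm b) = idm (tens a b);
  tensm_comp : forall (a1 a2 a3 b1 b2 b3 : smc_cat) (f1 : hom a1 a2) (f2 : hom a2 a3)
      (g1 : hom b1 b2) (g2 : hom b2 b3),
    tensm (f2 ∘ f1) (g2 ∘ g1) = tensm f2 g2 ∘ tensm f1 g1;
  asc : forall a b c : smc_cat, hom (tens (tens a b) c) (tens a (tens b c));
  asci : forall a b c : smc_cat, hom (tens a (tens b c)) (tens (tens a b) c);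
  asc_asci : forall a b c : smc_cat, asc a b c ∘ asci a b c = idm _;
  asci_asc : forall a b c : smc_cat, asci a b c ∘ asc a b c = idm _;
  asc_nat : forall (a a' b b' c c' : smc_cat) (f : hom a a') (g : hom b b') (h : hom c c'),
    asc a' b' c' ∘ tensm (tensm f g) h
    = tensm f (tensm g h) ∘ asc a b c;
  lu : forall a : smc_cat, hom (tens tunit a) a;
  lui : forall a : smc_cat, hom a (tens tunit a);
  lu_lui : forall a : smc_cat, lu a ∘ lui a = idm _;
  lui_lu : forall a : smc_cat, lui a ∘ lu a = idm _;
  lu_nat : forall (a b : smc_cat) (f : hom a b), f ∘ lu a = lu b ∘ tensm (idm tunit) f;
  ru : forall a : smc_cat, hom (tens a tunit) a;
  rui : forall a : smc_cat, hom a (tens a tunit);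
  ru_rui : forall a : smc_cat, ru a ∘ rui a = idm _;
  rui_ru : forall a : smc_cat, rui a ∘ ru a = idm _;
  ru_nat : forall (a b : smc_cat) (f : hom a b), f ∘ ru a = ru b ∘ tensm f (idm tunit);
  br : forall a b : smc_cat, hom (tens a b) (tens b a);
  br_nat : forall (a b c d : smc_cat) (f : hom a b) (g : hom c d),
    br b d ∘ tensm f g = tensm g f ∘ br a c;
  br_inv : forall a b : smc_cat, br b a ∘ br a b = idm _;
  pentagon : forall a b c d : smc_cat,
    tensm (idm a) (asc b c d) ∘ asc a (tens b c) d ∘ tensm (asc a b c) (idm d)
    = asc a b (tens c d) ∘ asc (tens a b) c d;
  triangle : forall a b : smc_cat,
    tensm (idm a) (lu b) ∘ asc a tunit b = tensm (ru a) (idm b);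
  hexagon : forall a b c : smc_cat,
    asc b c a ∘ br a (tens b c) ∘ asc a b c
    = tensm (idm b) (br a c) ∘ asc b a c ∘ tensm (br a b) (idm c) }.

Arguments tens {_} _ _.
Arguments tensm {_ _ _ _ _} _ _.
Arguments tunit {_}.
Arguments asc {_} _ _ _.
Arguments asci {_} _ _ _.
Arguments lu {_} _.
Arguments lui {_} _.
Arguments ru {_} _.
Arguments rui {_} _.
Arguments br {_} _ _.

Notation "a ⊗ b" := (tens a b) (at level 30, right associativity).
Notation "f ⊠ g" := (tensm f g) (at level 30, right associativity).

(* the interchange (a⊗b)⊗(c⊗d) -> (a⊗c)⊗(b⊗d) ("id ⊗ swap ⊗ id") *)
Definition shuf (S : SMC) (a b c d : S) : hom ((a ⊗ b) ⊗ (c ⊗ d)) ((a ⊗ c) ⊗ (b ⊗ d)) :=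
  asci a c (b ⊗ d) ∘ (idm a ⊠ asc c b d) ∘ (idm a ⊠ (br b c ⊠ idm d))
  ∘ (idm a ⊠ asci b c d) ∘ asc a b (c ⊗ d).

Record Markov := {
  mk_smc :> SMC;
  copy : forall a : mk_smc, hom a (a ⊗ a);
  del : forall a : mk_smc, hom a tunit;
  copy_coassoc : forall a : mk_smc,
    asc a a a ∘ (copy a ⊠ idm a) ∘ copy a = (idm a ⊠ copy a) ∘ copy a;
  copy_counitl : forall a : mk_smc, lu a ∘ (del a ⊠ idm a) ∘ copy a = idm a;
  copy_counitr : forall a : mk_smc, ru a ∘ (idm a ⊠ del a) ∘ copy a = idm a;
  copy_comm : forall a : mk_smc, br a a ∘ copy a = copy a;
  (* compatibility with ⊗ (for del and for the unit this is implied by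
     terminality of the unit) *)
  copy_tens : forall a b : mk_smc, copy (a ⊗ b) = shuf a a b b ∘ (copy a ⊠ copy b);
  terminal : forall (a : mk_smc) (f g : hom a tunit), f = g }.

Arguments copy {_} _.
Arguments del {_} _.

Section MarkovDefs.
Context {M : Markov}.

Definition deterministic {A B : M} (f : hom A B) : Prop :=
  copy B ∘ f = (f ⊠ f) ∘ copy A.

Definition pairing {A X Y : M} (f : hom A X) (g : hom A Y) : hom A (X ⊗ Y) :=
  (f ⊠ g) ∘ copy A.

Definition marg1 {A X Y : M} (f : hom A (X ⊗ Y)) : hom A X :=
  ru X ∘ (idm X ⊠ del Y) ∘ f.
Definition marg2 {A X Y : M} (f : hom A (X ⊗ Y)) : hom A Y :=
  lu Y ∘ (del X ⊠ idm Y) ∘ f.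

Definition stens {X Y : M} (x : hom tunit X) (y : hom tunit Y) : hom tunit (X ⊗ Y) :=
  (x ⊠ y) ∘ lui tunit.

Definition as_eq {X Y : M} (mu : hom tunit X) (f g : hom X Y) : Prop :=
  pairing (idm X) f ∘ mu = pairing (idm X) g ∘ mu.

Definition abs_cont {X : M} (mu nu : hom tunit X) : Prop :=
  forall (Y : M) (f g : hom X Y), as_eq nu f g -> as_eq mu f g.

Definition cond_first {A X Y : M} (f : hom A (X ⊗ Y)) (h : hom (X ⊗ A) Y) : Prop :=
  f = (idm X ⊠ h) ∘ asc X X A ∘ (copy X ⊠ idm A) ∘ (marg1 f ⊠ idm A) ∘ copy A.

Definition cond_second {A X Y : M} (f : hom A (X ⊗ Y)) (h : hom (Y ⊗ A) X) : Prop :=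
  cond_first (br X Y ∘ f) h.

End MarkovDefs.

Definition has_conditionals (M : Markov) : Prop :=
  forall (A X Y : M) (f : hom A (X ⊗ Y)), exists h, cond_first f h.

Definition precise_supports (M : Markov) : Prop :=
  forall (X Y : M) (x : hom tunit X) (y : hom tunit Y) (f : hom X Y) (mu : hom tunit X),
    deterministic x -> deterministic y ->
    (abs_cont (stens x y) (pairing (idm X) f ∘ mu) <-> abs_cont x mu /\ abs_cont y (f ∘ x)).

(* Obs(C): raw triples (K, f, o); the Obs-morphisms are those with
   o deterministic (predicate isObs).                                  *)
Record ObsHom {M : Markov} (X Y : M) := {
  okey : M;
  ofun : hom X (Y ⊗ okey);
  oobs : hom tunit okey }.

Arguments okey {M X Y} _.
Arguments ofun {M X Y} _.
Arguments oobs {M X Y} _.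

Section ObsDefs.
Context {M : Markov}.

Definition isObs {X Y : M} (F : ObsHom X Y) : Prop := deterministic (oobs F).

Definition ObsId (X : M) : ObsHom X X :=
  {| okey := tunit; ofun := rui X; oobs := idm tunit |}.

Definition ObsComp {X Y Z : M} (G : ObsHom Y Z) (F : ObsHom X Y) : ObsHom X Z :=
  {| okey := okey G ⊗ okey F;
     ofun := asc Z (okey G) (okey F) ∘ (ofun G ⊠ idm (okey F)) ∘ ofun F;
     oobs := stens (oobs G) (oobs F) |}.

Definition ObsTens {X Y X' Y' : M} (F : ObsHom X Y) (G : ObsHom X' Y') : ObsHom (X ⊗ X') (Y ⊗ Y') :=
  {| okey := okey F ⊗ okey G;
     ofun := shuf Y (okey F) Y' (okey G) ∘ (ofun F ⊠ ofun G);
     oobs := stens (oobs F) (oobs G) |}.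

Definition ObsJ {X Y : M} (f : hom X Y) : ObsHom X Y :=
  {| okey := tunit; ofun := rui Y ∘ f; oobs := idm tunit |}.

(* tensor of two states I ⇝ X, I ⇝ Y as a state I ⇝ X ⊗ Y (I ⊗ I ≅ I) *)
Definition ObsStens {X Y : M} (F : ObsHom tunit X) (G : ObsHom tunit Y) : ObsHom tunit (X ⊗ Y) :=
  ObsComp (ObsTens F G) (ObsJ (lui tunit)).

Definition isFail {X : M} (P : ObsHom tunit X) : Prop :=
  ~ abs_cont (oobs P) (marg2 (ofun P)).

Definition sim {X : M} (P Q : ObsHom tunit X) : Prop :=
  (abs_cont (oobs P) (marg2 (ofun P)) /\ abs_cont (oobs Q) (marg2 (ofun Q)) /\
   exists (h : hom (okey P ⊗ tunit) X) (h' : hom (okey Q ⊗ tunit) X),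
     cond_second (ofun P) h /\ cond_second (ofun Q) h' /\
     h ∘ rui (okey P) ∘ oobs P = h' ∘ rui (okey Q) ∘ oobs Q)
  \/ (isFail P /\ isFail Q).

(* F ≈ G : equality in Cond(C) *)
Definition approx {X Y : M} (F G : ObsHom X Y) : Prop :=
  forall (A : M) (P : ObsHom tunit (A ⊗ X)), isObs P ->
    sim (ObsComp (ObsTens (ObsId A) F) P) (ObsComp (ObsTens (ObsId A) G) P).

Definition IsFailure {X : M} (P : ObsHom tunit X) : Prop :=
  exists Q : ObsHom tunit X, isObs Q /\ isFail Q /\ approx P Q.

Definition ObsCopyable {X Y : M} (F : ObsHom X Y) : Prop :=
  approx (ObsComp (ObsJ (copy Y)) F) (ObsComp (ObsTens F F) (ObsJ (copy X))).
Definition ObsDiscardable {X Y : M} (F : ObsHom X Y) : Prop :=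
  approx (ObsComp (ObsJ (del Y)) F) (ObsJ (del X)).

End ObsDefs.

(* Main.v *)
Require Import Defs.
From Stdlib Require Import Setoid Classical.
Set Implicit Arguments.

Section Ctx.
Context {C : Cat}.
Lemma ctx2 {a b c d : C} {x1 : hom b c} {x2 : hom a b} {y : hom a c}
  (e : x1 ∘ x2 = y) (w : hom c d) : w ∘ x1 ∘ x2 = w ∘ y.
Proof. now rewrite <- comp_assoc, e. Qed.
Lemma ctx3 {a b c d e : C} {x1 : hom c d} {x2 : hom b c} {x3 : hom a b} {y : hom a d}
  (E : x1 ∘ x2 ∘ x3 = y) (w : hom d e) : w ∘ x1 ∘ x2 ∘ x3 = w ∘ y.
Proof. rewrite <- E. now rewrite !comp_assoc. Qed.
Lemma ctx4 {a b c d e f : C} {x1 : hom d e} {x2 : hom c d} {x3 : hom b c} {x4 : hom a b} {y : hom a e}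
  (E : x1 ∘ x2 ∘ x3 ∘ x4 = y) (w : hom e f) : w ∘ x1 ∘ x2 ∘ x3 ∘ x4 = w ∘ y.
Proof. rewrite <- E. now rewrite !comp_assoc. Qed.
Lemma ctx5 {a b c d e f g : C} {x1 : hom e f} {x2 : hom d e} {x3 : hom c d} {x4 : hom b c} {x5 : hom a b} {y : hom a f}
  (E : x1 ∘ x2 ∘ x3 ∘ x4 ∘ x5 = y) (w : hom f g) : w ∘ x1 ∘ x2 ∘ x3 ∘ x4 ∘ x5 = w ∘ y.
Proof. rewrite <- E. now rewrite !comp_assoc. Qed.
Lemma ctx6 {a b c d e f g h : C} {x1 : hom f g} {x2 : hom e f} {x3 : hom d e} {x4 : hom c d} {x5 : hom b c} {x6 : hom a b} {y : hom a g}
  (E : x1 ∘ x2 ∘ x3 ∘ x4 ∘ x5 ∘ x6 = y) (w : hom g h) : w ∘ x1 ∘ x2 ∘ x3 ∘ x4 ∘ x5 ∘ x6 = w ∘ y.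
Proof. rewrite <- E. now rewrite !comp_assoc. Qed.
End Ctx.

Ltac nrm := rewrite ?comp_assoc.
Ltac inst L k := lazymatch type of L with
  | forall x : _, _ => let e := open_constr:(L _) in inst e k
  | _ => k L end.
Ltac rw0 L := first [ rewrite (ctx6 L) | rewrite (ctx5 L) | rewrite (ctx4 L) | rewrite (ctx3 L)
  | rewrite (ctx2 L) | rewrite L ].
Ltac rw L := nrm; inst L ltac:(fun L' => rw0 L'); nrm.
Ltac rwr L := nrm; inst L ltac:(fun L' => rw0 (eq_sym L')); nrm.
Ltac nrmh H := rewrite ?comp_assoc in H.
Ltac rw0h L H := first [ rewrite (ctx6 L) in H | rewrite (ctx5 L) in H | rewrite (ctx4 L) in H | rewrite (ctx3 L) in H
  | rewrite (ctx2 L) in H | rewrite L in H ].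
Ltac rwh L H := nrmh H; inst L ltac:(fun L' => rw0h L' H); nrmh H.
Ltac rwrh L H := nrmh H; inst L ltac:(fun L' => rw0h (eq_sym L') H); nrmh H.

Section Coh.
Context {M : Markov}.
Notation I := (tunit (s := M)).

Lemma tc2 {a1 a2 a3 b1 b2 b3 : M} (f1 : hom a1 a2) (f2 : hom a2 a3) (g1 : hom b1 b2) (g2 : hom b2 b3) :
  (f2 ⊠ g2) ∘ (f1 ⊠ g1) = (f2 ∘ f1) ⊠ (g2 ∘ g1).
Proof. now rewrite tensm_comp. Qed.

Lemma tsl {a b c d : M} (f : hom a b) (g : hom c d) : f ⊠ g = (f ⊠ idm d) ∘ (idm a ⊠ g).
Proof. now rewrite tc2, comp_idl, comp_idr. Qed.
Lemma tsr {a b c d : M} (f : hom a b) (g : hom c d) : f ⊠ g = (idm b ⊠ g) ∘ (f ⊠ idm c).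
Proof. now rewrite tc2, comp_idl, comp_idr. Qed.

Lemma term (a : M) (f g : hom a I) : f = g.
Proof. apply terminal. Qed.
Lemma del_nat {a b : M} (f : hom a b) : del b ∘ f = del a.
Proof. apply terminal. Qed.
Lemma del_I : del I = idm I.
Proof. apply terminal. Qed.

Lemma asci_nat (a a' b b' c c' : M) (f : hom a a') (g : hom b b') (h : hom c c') :
  asci a' b' c' ∘ (f ⊠ (g ⊠ h)) = ((f ⊠ g) ⊠ h) ∘ asci a b c.
Proof.
  rewrite <- (comp_idr (asci a' b' c' ∘ _)), <- (asc_asci a b c).
  nrm. rewrite <- (comp_assoc _ (f ⊠ (g ⊠ h))), <- asc_nat. nrm.
  now rewrite asci_asc, comp_idl.
Qed.
Lemma lui_nat (a b : M) (f : hom a b) : lui b ∘ f = (idm I ⊠ f) ∘ lui a.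
Proof.
  rewrite <- (comp_idr (lui b ∘ f)), <- (lu_lui a). nrm.
  rewrite <- (comp_assoc _ f), lu_nat. nrm. now rewrite lui_lu, comp_idl.
Qed.
Lemma rui_nat (a b : M) (f : hom a b) : rui b ∘ f = (f ⊠ idm I) ∘ rui a.
Proof.
  rewrite <- (comp_idr (rui b ∘ f)), <- (ru_rui a). nrm.
  rewrite <- (comp_assoc _ f), ru_nat. nrm. now rewrite rui_ru, comp_idl.
Qed.

Lemma tI_inj_r {a b : M} (f g : hom a b) : f ⊠ idm I = g ⊠ idm I -> f = g.
Proof.
  intro H. rewrite <- (comp_idr f), <- (comp_idr g), <- (ru_rui a).
  nrm. rewrite !ru_nat, H. reflexivity.
Qed.
Lemma tI_inj_l {a b : M} (f g : hom a b) : idm I ⊠ f = idm I ⊠ g -> f = g.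
Proof.
  intro H. rewrite <- (comp_idr f), <- (comp_idr g), <- (lu_lui a).
  nrm. rewrite !lu_nat, H. reflexivity.
Qed.

(* objects isomorphic to the unit *)
Definition tI (a : M) : Prop := exists e : hom I a, e ∘ del a = idm a.
Lemma tI_uniq {a b : M} : tI b -> forall f g : hom a b, f = g.
Proof.
  intros [e He] f g. rewrite <- (comp_idl f), <- (comp_idl g), <- He.
  rewrite <- !comp_assoc, !del_nat. reflexivity.
Qed.
Lemma tI_I : tI I.
Proof. exists (idm I). now rewrite del_I, comp_idl. Qed.
Lemma tI_II : tI (I ⊗ I).
Proof.
  exists (lui I). rewrite <- (lui_lu I). f_equal. apply term.
Qed.
Lemma tI_tens {a b : M} : tI a -> tI b -> tI (a ⊗ b).
Proof.
  intros [ea Ha] [eb Hb]. exists ((ea ⊠ eb) ∘ lui I).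
  assert (E : lui I ∘ del (a ⊗ b) = del a ⊠ del b) by apply (tI_uniq tI_II).
  rewrite <- comp_assoc, E, tc2, Ha, Hb. apply tensm_id.
Qed.
Lemma II_uniq {a : M} (f g : hom a (I ⊗ I)) : f = g.
Proof. apply (tI_uniq tI_II). Qed.

Lemma lu_ru_I : lu I = ru I.
Proof. apply term. Qed.
Lemma br_II : br I I = idm (I ⊗ I).
Proof. apply II_uniq. Qed.
Lemma copy_I : copy I = lui I.
Proof. apply II_uniq. Qed.
Lemma rui_lui_I : rui I = lui I.
Proof. apply II_uniq. Qed.

Lemma lu_IA (a : M) : lu (I ⊗ a) = idm I ⊠ lu a.
Proof.
  assert (H := lu_nat (lu a)).
  rewrite <- (comp_idl (lu (I ⊗ a))), <- (comp_idl (idm I ⊠ lu a)), <- (lui_lu a).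
  rewrite <- !comp_assoc, H. reflexivity.
Qed.

Lemma asc_cancel {z a b c : M} (x y : hom z ((a ⊗ b) ⊗ c)) : asc a b c ∘ x = asc a b c ∘ y -> x = y.
Proof. intros H. rewrite <- (comp_idl x), <- (comp_idl y), <- (asci_asc a b c), <- !comp_assoc, H. reflexivity. Qed.
Lemma asci_cancel {z a b c : M} (x y : hom z (a ⊗ (b ⊗ c))) : asci a b c ∘ x = asci a b c ∘ y -> x = y.
Proof. intros H. rewrite <- (comp_idl x), <- (comp_idl y), <- (asc_asci a b c), <- !comp_assoc, H. reflexivity. Qed.
Lemma br_cancel {z a b : M} (x y : hom z (a ⊗ b)) : br a b ∘ x = br a b ∘ y -> x = y.
Proof. intros H. rewrite <- (comp_idl x), <- (comp_idl y), <- (br_inv a b), <- !comp_assoc, H. reflexivity. Qed.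
Lemma lu_cancel {z a : M} (x y : hom z (I ⊗ a)) : lu a ∘ x = lu a ∘ y -> x = y.
Proof. intros H. rewrite <- (comp_idl x), <- (comp_idl y), <- (lui_lu a), <- !comp_assoc, H. reflexivity. Qed.
Lemma ru_cancel {z a : M} (x y : hom z (a ⊗ I)) : ru a ∘ x = ru a ∘ y -> x = y.
Proof. intros H. rewrite <- (comp_idl x), <- (comp_idl y), <- (rui_ru a), <- !comp_assoc, H. reflexivity. Qed.
Lemma asc_cancel_r {z a b c : M} (x y : hom (a ⊗ (b ⊗ c)) z) : x ∘ asc a b c = y ∘ asc a b c -> x = y.
Proof. intros H. rewrite <- (comp_idr x), <- (comp_idr y), <- (asc_asci a b c), !comp_assoc, H. reflexivity. Qed.
Lemma asci_cancel_r {z a b c : M} (x y : hom ((a ⊗ b) ⊗ c) z) : x ∘ asci a b c = y ∘ asci a b c -> x = y.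
Proof. intros H. rewrite <- (comp_idr x), <- (comp_idr y), <- (asci_asc a b c), !comp_assoc, H. reflexivity. Qed.

Lemma kelly1 (a b : M) : (idm a ⊠ ru b) ∘ asc a b I = ru (a ⊗ b).
Proof.
  assert (P := pentagon a b I I).
  assert (P2 := f_equal (fun t => (idm a ⊠ (idm b ⊠ lu I)) ∘ t) P). cbv beta in P2.
  rewrite !comp_assoc in P2.
  rewrite tc2 in P2. rewrite (triangle b I), comp_idl in P2.
  rewrite <- asc_nat in P2. rewrite <- asc_nat in P2.
  rewrite tensm_id, (ctx2 (triangle (a ⊗ b) I)) in P2.
  rewrite <- comp_assoc, tc2, comp_idl in P2.
  apply tI_inj_r.
  apply asc_cancel. rewrite P2. f_equal.
Qed.

Lemma tidl {a b c d : M} (f : hom c d) (g : hom b c) : idm a ⊠ (f ∘ g) = (idm a ⊠ f) ∘ (idm a ⊠ g).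
Proof. now rewrite tc2, comp_idl. Qed.
Lemma tidr {a b c d : M} (f : hom c d) (g : hom b c) : (f ∘ g) ⊠ idm a = (f ⊠ idm a) ∘ (g ⊠ idm a).
Proof. now rewrite tc2, comp_idl. Qed.
Lemma cancel_r {a b z : M} (i : hom a b) (j : hom b a) : i ∘ j = idm b ->
  forall x y : hom b z, x ∘ i = y ∘ i -> x = y.
Proof. intros H x y E. rewrite <- (comp_idr x), <- (comp_idr y), <- H, !comp_assoc, E. reflexivity. Qed.
Lemma cancel_l {a b z : M} (i : hom a b) (j : hom b a) : j ∘ i = idm a ->
  forall x y : hom z a, i ∘ x = i ∘ y -> x = y.
Proof. intros H x y E. rewrite <- (comp_idl x), <- (comp_idl y), <- H, <- !comp_assoc, E. reflexivity. Qed.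

Lemma kelly2 (b c : M) : lu (b ⊗ c) ∘ asc I b c = lu b ⊠ idm c.
Proof.
  apply tI_inj_l.
  apply (cancel_r (asc I (I ⊗ b) c ∘ (asc I I b ⊠ idm c)) ((asci I I b ⊠ idm c) ∘ asci I (I ⊗ b) c)).
  { rw @tc2. rewrite asc_asci, comp_idl, tensm_id, comp_idr. apply asc_asci. }
  rewrite tidl. rw (pentagon I I b c). rewrite (triangle I (b ⊗ c)).
  rewrite <- asc_nat. rwr @tidr. rewrite triangle. rewrite <- (tensm_id b c). symmetry; apply asc_nat.
Qed.

Lemma ru_AI (a : M) : ru (a ⊗ I) = ru a ⊠ idm I.
Proof. rewrite <- kelly1, <- triangle, lu_ru_I. reflexivity. Qed.
Lemma rui_AI (a : M) : rui (a ⊗ I) = rui a ⊠ idm I.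
Proof.
  apply (cancel_l (ru (a ⊗ I)) (rui (a ⊗ I))); [apply rui_ru|].
  rewrite ru_rui, ru_AI, tc2, ru_rui, comp_idl. symmetry; apply tensm_id.
Qed.
Lemma lui_IA (a : M) : lui (I ⊗ a) = idm I ⊠ lui a.
Proof.
  apply (cancel_l (lu (I ⊗ a)) (lui (I ⊗ a))); [apply lui_lu|].
  rewrite lu_lui, lu_IA, tc2, lu_lui, comp_idl. symmetry; apply tensm_id.
Qed.

Lemma lu_br (a : M) : lu a ∘ br a I = ru a.
Proof.
  assert (H := hexagon a I I).
  assert (H2 := f_equal (fun t => lu (I ⊗ a) ∘ t) H). cbv beta in H2.
  rewrite !comp_assoc in H2.
  rewrite kelly2 in H2.
  rewrite <- br_nat in H2. rwh (triangle a I) H2.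
  rewrite <- lu_nat in H2. rwh (kelly2 a I) H2. rwh @tc2 H2.
  apply br_cancel in H2. rewrite comp_idl in H2. apply tI_inj_r in H2. now symmetry.
Qed.
Lemma ru_br (a : M) : ru a ∘ br I a = lu a.
Proof. rewrite <- lu_br. rw br_inv. apply comp_idr. Qed.
Lemma br_rui (a : M) : br a I ∘ rui a = lui a.
Proof.
  apply (cancel_l (lu a) (lui a)); [apply lui_lu|].
  rw lu_br. now rewrite ru_rui, lu_lui.
Qed.
Lemma br_lui (a : M) : br I a ∘ lui a = rui a.
Proof.
  apply (cancel_l (ru a) (rui a)); [apply rui_ru|].
  rw ru_br. now rewrite ru_rui, lu_lui.
Qed.
Lemma kelly1i (a b : M) : asc a b I ∘ rui (a ⊗ b) = idm a ⊠ rui b.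
Proof.
  apply (cancel_l (idm a ⊠ ru b) (idm a ⊠ rui b)).
  { rewrite tc2, rui_ru, comp_idl. apply tensm_id. }
  rw kelly1. rewrite ru_rui, tc2, ru_rui, comp_idl. symmetry; apply tensm_id.
Qed.
Lemma kelly2i (b c : M) : asc I b c ∘ (lui b ⊠ idm c) = lui (b ⊗ c).
Proof.
  apply (cancel_l (lu (b ⊗ c)) (lui (b ⊗ c))); [apply lui_lu|].
  rw kelly2. rewrite tc2, lu_lui, comp_idl, tensm_id. symmetry; apply lu_lui.
Qed.
Lemma kelly2ii (b c : M) : (lu b ⊠ idm c) ∘ asci I b c = lu (b ⊗ c).
Proof. rewrite <- kelly2. rw asc_asci. apply comp_idr. Qed.
Lemma trii (a b : M) : asc a I b ∘ (rui a ⊠ idm b) = idm a ⊠ lui b.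
Proof.
  apply (cancel_l (idm a ⊠ lu b) (idm a ⊠ lui b)).
  { rewrite tc2, lui_lu, comp_idl. apply tensm_id. }
  rw triangle. rewrite !tc2, ru_rui, lu_lui, !comp_idl, !tensm_id. reflexivity.
Qed.
Lemma triii (a b : M) : asci a I b ∘ (idm a ⊠ lui b) = rui a ⊠ idm b.
Proof. rewrite <- trii. rw asci_asc. apply comp_idl. Qed.
Lemma tri2 (a b : M) : (ru a ⊠ idm b) ∘ asci a I b = idm a ⊠ lu b.
Proof. rewrite <- triangle. rw asc_asci. apply comp_idr. Qed.


Lemma tcl {a b c d e : M} (f : hom b c) (g : hom a b) (l : hom d e) : (f ∘ g) ⊠ l = (f ⊠ l) ∘ (g ⊠ idm d).
Proof. now rewrite tc2, comp_idr. Qed.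
Lemma tcl' {a b c d e : M} (f : hom b c) (g : hom a b) (l : hom d e) : (f ∘ g) ⊠ l = (f ⊠ idm e) ∘ (g ⊠ l).
Proof. now rewrite tc2, comp_idl. Qed.
Lemma tcr {a b c d e : M} (f : hom b c) (g : hom a b) (l : hom d e) : l ⊠ (f ∘ g) = (l ⊠ f) ∘ (idm d ⊠ g).
Proof. now rewrite tc2, comp_idr. Qed.
Lemma tcr' {a b c d e : M} (f : hom b c) (g : hom a b) (l : hom d e) : l ⊠ (f ∘ g) = (idm e ⊠ f) ∘ (l ⊠ g).
Proof. now rewrite tc2, comp_idl. Qed.
End Coh.

Ltac mg := repeat (rw @tc2); rewrite ?comp_idl, ?comp_idr.

Section Str.
Context {M : Markov}.
Notation I := (tunit (s := M)).

Lemma shuf_nat (a a' b b' c c' d d' : M) (f : hom a a') (g : hom b b') (h : hom c c') (l : hom d d') :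
  shuf a' b' c' d' ∘ ((f ⊠ g) ⊠ (h ⊠ l)) = ((f ⊠ h) ⊠ (g ⊠ l)) ∘ shuf a b c d.
Proof.
  unfold shuf. rwr @asci_nat.
  rewrite <- !comp_assoc. f_equal.
  rw @asc_nat. mg. f_equal.
  rw @asci_nat. rw @tc2. rewrite br_nat. rewrite ?comp_idl, ?comp_idr.
  rewrite tcl. rw @asc_nat. reflexivity.
Qed.

Lemma C7 (a c d : M) : (idm (a ⊗ c) ⊠ lu d) ∘ shuf a I c d ∘ (rui a ⊠ idm (c ⊗ d)) = asci a c d.
Proof.
  unfold shuf. rewrite <- (tensm_id a c). rwr @asci_nat. mg.
  rw @triangle. rw @tc2. rewrite ru_br, comp_idl. rw @kelly2ii. rw @triangle. rw @tc2.
  rewrite ru_rui, comp_idl, tensm_id. apply comp_idr.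
Qed.

Lemma C8a (K L : M) : lu (K ⊗ L) ∘ (lu I ⊠ idm (K ⊗ L)) ∘ shuf I K I L = lu K ⊠ lu L.
Proof.
  unfold shuf. rw @kelly2ii. rewrite lu_IA. mg.
  rw @kelly2. rw @tc2. rewrite lu_br, comp_idl. rw @tri2.
  rwr @asc_nat. rw @kelly2. rw @tc2.
  rewrite ?tensm_id, ?comp_idl, ?comp_idr. reflexivity.
Qed.
Lemma C8 (X Y K L : M) : lu (K ⊗ L) ∘ (del (X ⊗ Y) ⊠ idm (K ⊗ L)) ∘ shuf X K Y L
  = (lu K ∘ (del X ⊠ idm K)) ⊠ (lu L ∘ (del Y ⊠ idm L)).
Proof.
  replace (del (X ⊗ Y)) with (lu I ∘ (del X ⊠ del Y)) by apply term.
  rewrite tcl', <- (tensm_id K L). rwr @shuf_nat. rewrite tensm_id. rw @C8a. apply tc2.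
Qed.

Lemma kelly2iii (b c : M) : asci I b c ∘ lui (b ⊗ c) = lui b ⊠ idm c.
Proof. rewrite <- kelly2i. rw @asci_asc. apply comp_idl. Qed.

Lemma LU2 (a b : M) : shuf I I a b ∘ (lui I ⊠ idm (a ⊗ b)) ∘ lui (a ⊗ b) = lui a ⊠ lui b.
Proof.
  unfold shuf. rw @kelly2i. rewrite lui_IA. mg.
  rw @kelly2iii. rw @tc2. rewrite br_lui, comp_idl. rw @trii.
  rw @asci_nat. rw @kelly2iii. rw @tc2. rewrite ?tensm_id, ?comp_idl, ?comp_idr.
  reflexivity.
Qed.

Lemma br_Ia (a : M) : br I a = rui a ∘ lu a.
Proof. rewrite <- ru_br. rw rui_ru. now rewrite comp_idl. Qed.

Lemma shufAI (a k k' : M) : shuf a I k k' = ((ru a ⊠ idm k) ⊠ lui k') ∘ asci (a ⊗ I) k k'.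
Proof.
  unfold shuf. mg. rewrite br_Ia, tidr. rw @trii. rw @kelly2ii.
  rewrite tcr. rw @triangle. rw @asci_nat.
  replace ((ru a ⊠ idm k) ⊠ lui k') with (((idm a ⊠ idm k) ⊠ lui k') ∘ ((ru a ⊠ idm k) ⊠ idm k'))
    by (rewrite !tc2; now rewrite ?comp_idl, ?comp_idr).
  rwr @asci_nat. now rewrite (tensm_id k k').
Qed.

Lemma inv_unique {a b : M} (X Y : hom a b) (X' Y' : hom b a) :
  X = Y -> X' ∘ X = idm a -> Y ∘ Y' = idm b -> X' = Y'.
Proof.
  intros E H1 H2. rewrite <- (comp_idr X'), <- H2, <- E. rewrite comp_assoc, H1. apply comp_idl.
Qed.

Lemma hexi (a b c : M) :
  asci c a b ∘ br (a ⊗ b) c ∘ asci a b c = (br a c ⊠ idm b) ∘ asci a c b ∘ (idm a ⊠ br b c).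
Proof.
  apply (inv_unique _ _ (hexagon c a b)).
  - rw asci_asc. rewrite comp_idr. rw br_inv. rewrite comp_idr. apply asci_asc.
  - rw @tc2. rewrite br_inv, comp_idl, tensm_id, comp_idr. rw asc_asci. rewrite comp_idr, tc2, br_inv, comp_idl.
    apply tensm_id.
Qed.
Lemma hexi2 (a b c : M) :
  asci c a b ∘ br (a ⊗ b) c = (br a c ⊠ idm b) ∘ asci a c b ∘ (idm a ⊠ br b c) ∘ asc a b c.
Proof. rewrite <- hexi. rw asci_asc. now rewrite comp_idr. Qed.

Lemma P1 (a b c d : M) :
  asc (a ⊗ b) c d ∘ (asci a b c ⊠ idm d) = asci a b (c ⊗ d) ∘ (idm a ⊠ asc b c d) ∘ asc a (b ⊗ c) d.
Proof.
  apply (cancel_l (asc a b (c ⊗ d)) (asci a b (c ⊗ d))); [apply asci_asc|].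
  rwr pentagon. rw @tc2. rewrite asc_asci, comp_idl, tensm_id, comp_idr.
  rw asc_asci. now rewrite comp_idl.
Qed.
Lemma P2 (a b c d : M) :
  asc a (b ⊗ c) d ∘ (asc a b c ⊠ idm d) ∘ asci (a ⊗ b) c d = (idm a ⊠ asci b c d) ∘ asc a b (c ⊗ d).
Proof.
  apply (cancel_r (asc (a ⊗ b) c d) (asci (a ⊗ b) c d)); [apply asc_asci|].
  rw asci_asc. rewrite comp_idr. rwr pentagon. rw @tc2. rewrite asci_asc, comp_idl, tensm_id, comp_idl.
  reflexivity.
Qed.

Lemma core (g1 g2 a1 a2 : M) :
  asc (a1 ⊗ g1) g2 a2 ∘ (asci a1 g1 g2 ⊠ idm a2) ∘ (br (g1 ⊗ g2) a1 ⊠ idm a2) ∘ asci (g1 ⊗ g2) a1 a2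
  = (br g1 a1 ⊠ idm (g2 ⊗ a2)) ∘ shuf g1 g2 a1 a2.
Proof.
  rw @tc2. rewrite hexi2, comp_idl. rewrite !tidr. nrm.
  rw @asc_nat. rewrite tensm_id. unfold shuf. nrm.
  rewrite <- !comp_assoc. f_equal. nrm.
  rw @P1. rw @asc_nat. rw @P2. reflexivity.
Qed.
End Str.

Section Mk.
Context {M : Markov}.
Notation I := (tunit (s := M)).

Lemma counitl (a : M) : (del a ⊠ idm a) ∘ copy a = lui a.
Proof.
  apply (cancel_l (lu a) (lui a)); [apply lui_lu|]. rewrite lu_lui. nrm. apply copy_counitl.
Qed.
Lemma counitr (a : M) : (idm a ⊠ del a) ∘ copy a = rui a.
Proof.
  apply (cancel_l (ru a) (rui a)); [apply rui_ru|]. rewrite ru_rui. nrm. apply copy_counitr.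
Qed.
Lemma I4_uniq {z : M} (f g : hom z ((I ⊗ I) ⊗ (I ⊗ I))) : f = g.
Proof. apply (tI_uniq (tI_tens tI_II tI_II)). Qed.

Lemma det_idm : deterministic (idm I).
Proof. unfold deterministic. apply II_uniq. Qed.

Lemma det_stens {X Y : M} (x : hom I X) (y : hom I Y) :
  deterministic x -> deterministic y -> deterministic (stens x y).
Proof.
  unfold deterministic, stens. intros Hx Hy.
  rewrite copy_tens. rw @tc2. rewrite Hx, Hy, <- tc2. rw @shuf_nat.
  rwr @tc2. rewrite <- !comp_assoc. f_equal. apply I4_uniq.
Qed.

Definition crep {K X : M} (ψ : hom I (X ⊗ K)) (k : hom K X) (ν : hom I K) : Prop :=
  ψ = (k ⊠ idm K) ∘ copy K ∘ ν.

Lemma crep_marg2 {K X : M} (ψ : hom I (X ⊗ K)) k ν : crep ψ k ν -> marg2 ψ = ν.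
Proof.
  unfold crep, marg2. intros ->. rw @tc2. rewrite del_nat, comp_idl. rw counitl.
  rewrite lu_lui. apply comp_idl.
Qed.

Lemma crep_br {K X : M} (ψ : hom I (X ⊗ K)) k ν : crep ψ k ν -> br X K ∘ ψ = (idm K ⊠ k) ∘ copy K ∘ ν.
Proof. unfold crep. intros ->. rw @br_nat. now rw @copy_comm. Qed.

Lemma crep_brmarg {K X : M} (ψ : hom I (X ⊗ K)) k ν : crep ψ k ν -> marg1 (br X K ∘ ψ) = ν.
Proof.
  intro H. unfold marg1. rewrite <- comp_assoc, (crep_br H). rw @tc2. rewrite del_nat, comp_idl.
  rw counitr. rewrite ru_rui. apply comp_idl.
Qed.

Lemma condI {X Y : M} (f : hom I (X ⊗ Y)) h : cond_first f h ->
  f = (idm X ⊠ (h ∘ rui X)) ∘ copy X ∘ marg1 f.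
Proof.
  unfold cond_first. intro H. rewrite H at 1. rewrite copy_I, <- rui_lui_I.
  rwr @rui_nat. rwr @rui_nat. rw @kelly1i. rw @tc2. rewrite comp_idl. reflexivity.
Qed.

Lemma cond2crep {K X : M} (ψ : hom I (X ⊗ K)) h : cond_second ψ h -> crep ψ (h ∘ rui K) (marg1 (br X K ∘ ψ)).
Proof.
  unfold cond_second, crep. intro H. apply condI in H.
  apply (cancel_l (br X K) (br K X)); [apply br_inv|].
  rewrite H at 1. rw @br_nat. now rw @copy_comm.
Qed.

Lemma crep2cond {K X : M} (ψ : hom I (X ⊗ K)) k ν : crep ψ k ν -> cond_second ψ (k ∘ ru K).
Proof.
  intro H. unfold cond_second, cond_first. rewrite (crep_brmarg H), (crep_br H).
  rewrite copy_I, <- rui_lui_I. rwr @rui_nat. rwr @rui_nat. rw @kelly1i. rw @tc2.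
  rewrite comp_idl. rw ru_rui. now rewrite comp_idr.
Qed.

Lemma crep_exists (HC : has_conditionals M) {K X : M} (ψ : hom I (X ⊗ K)) :
  exists k, crep ψ k (marg2 ψ).
Proof.
  destruct (HC _ _ _ (br X K ∘ ψ)) as [h Hh].
  assert (H := cond2crep (ψ := ψ) Hh). exists (h ∘ rui K).
  rewrite (crep_marg2 H). exact H.
Qed.

Lemma marg2_pair {K X : M} (k : hom K X) : lu X ∘ (del K ⊠ idm X) ∘ (idm K ⊠ k) ∘ copy K = k.
Proof.
  rw @tc2. rewrite comp_idl, comp_idr, tsr. rwr @lu_nat. rw counitl. rw @lu_lui. apply comp_idr.
Qed.

Lemma crep_val {K X : M} (ψ : hom I (X ⊗ K)) k k' ν (o : hom I K) :
  crep ψ k ν -> crep ψ k' ν -> abs_cont o ν -> k ∘ o = k' ∘ o.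
Proof.
  intros H H' Ho.
  assert (E : as_eq ν k k').
  { unfold as_eq, pairing. rewrite <- (crep_br H), <- (crep_br H'). reflexivity. }
  apply Ho in E. unfold as_eq, pairing in E.
  rewrite <- (marg2_pair k), <- (marg2_pair k'). rewrite <- !comp_assoc. rewrite !(comp_assoc _ (copy K)).
  rewrite E. reflexivity.
Qed.

Lemma stens_pair {X Y : M} (m1 : hom I X) (m2 : hom I Y) :
  stens m1 m2 = pairing (idm X) (m2 ∘ del X) ∘ m1.
Proof.
  unfold stens, pairing. rewrite tcr. rw counitr. rw @rui_nat. rewrite rui_lui_I. rw @tc2.
  now rewrite comp_idl, comp_idr.
Qed.

Lemma FPs (PS : precise_supports M) {X Y : M} (x m1 : hom I X) (y m2 : hom I Y) :
  deterministic x -> deterministic y ->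
  (abs_cont (stens x y) (stens m1 m2) <-> abs_cont x m1 /\ abs_cont y m2).
Proof.
  intros Hx Hy. rewrite (stens_pair m1 m2), (PS _ _ x y _ m1 Hx Hy).
  rewrite <- comp_assoc, del_nat, del_I, comp_idr. reflexivity.
Qed.

Lemma ac_refl {X : M} (x : hom I X) : abs_cont x x.
Proof. intros Y f g H. exact H. Qed.

Lemma ac_tI {X : M} (x m : hom I X) : tI X -> abs_cont x m.
Proof. intros T. rewrite (tI_uniq T x m). apply ac_refl. Qed.
End Mk.

Section CL.
Context {M : Markov}.
Notation I := (tunit (s := M)).

Lemma Mx (W a b : M) (c : hom I W) :
  ((idm a ⊠ c) ⊠ idm b) ∘ (rui a ⊠ idm b) = (br W a ⊠ idm b) ∘ asci W a b ∘ (c ⊠ idm (a ⊗ b)) ∘ lui (a ⊗ b).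
Proof.
  symmetry. rewrite <- (tensm_id a b). rw @asci_nat. rw @tc2. rewrite br_nat, comp_idl.
  rewrite tcl. rw @kelly2iii. rw @tc2. rewrite br_lui, comp_idl. reflexivity.
Qed.

Lemma compKI {Y Z KG K2 : M} (m : hom (Y ⊗ KG) Z) (νG : hom I KG) (ψ2 : hom I (Y ⊗ K2)) k2 ν2 :
  crep ψ2 k2 ν2 ->
  asc Z KG K2 ∘ (((m ⊠ idm KG) ∘ asci Y KG KG ∘ (idm Y ⊠ (copy KG ∘ νG)) ∘ rui Y) ⊠ idm K2) ∘ ψ2
  = ((m ∘ (k2 ⊠ idm KG) ∘ br KG K2) ⊠ idm (KG ⊗ K2)) ∘ copy (KG ⊗ K2) ∘ stens νG ν2.
Proof.
  unfold crep. intros ->. rw @tc2. rewrite comp_idl. rw @rui_nat.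
  rw @tc2. rewrite comp_idl, comp_idr, (tsl k2 (copy KG ∘ νG)).
  rewrite <- (tensm_id KG KG). rw @asci_nat. rewrite !tidr. rw @asc_nat. rw @asc_nat.
  rewrite !tensm_id. rewrite <- !comp_assoc. f_equal. f_equal. nrm.
  rw @Mx. rw @lui_nat. rw @lui_nat. rw @tc2. rw @tc2. rewrite !comp_idl, !comp_idr.
  rewrite copy_tens. unfold stens. rw (tc2 νG (copy KG) ν2 (copy K2)). rw @core. reflexivity.
Qed.

Lemma tensKI {A X K : M} (ψ : hom I (X ⊗ K)) k ν : crep ψ k ν ->
  shuf A I X K ∘ (rui A ⊠ ψ) = ((ru A ⊠ (k ∘ lu K)) ⊠ idm (I ⊗ K)) ∘ asci (A ⊗ I) (I ⊗ K) (I ⊗ K)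
    ∘ (idm (A ⊗ I) ⊠ (copy (I ⊗ K) ∘ stens (idm I) ν)) ∘ rui (A ⊗ I).
Proof.
  unfold crep. intros ->. unfold stens. rewrite copy_tens.
  rewrite (comp_assoc (lui I) (idm I ⊠ ν)). rewrite (ctx2 (tc2 (idm I) (copy I) ν (copy K))). rewrite comp_idr, copy_I, (tsl (lui I) (copy K ∘ ν)).
  rwr @lui_nat. rw @LU2. rewrite !tidl. rw @asci_nat. mg. rw @lu_lui. rewrite comp_idr.
  rewrite rui_AI. rw @tc2. rewrite ?comp_idl, ?comp_idr.
  rewrite <- (comp_assoc ν (copy K) (k ⊠ idm K)), (tcr' (k ⊠ idm K) (copy K ∘ ν) (rui A)). rewrite <- (tensm_id A I). rw @shuf_nat. rewrite shufAI. mg. rewrite ?tensm_id, ?comp_idl.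
  reflexivity.
Qed.

Lemma CLraw {A X K K2 : M} (ψ : hom I (X ⊗ K)) k ν (ψ2 : hom I ((A ⊗ I) ⊗ K2)) k2 ν2 :
  crep ψ k ν -> crep ψ2 k2 ν2 ->
  crep (asc (A ⊗ X) (I ⊗ K) K2 ∘ ((shuf A I X K ∘ (rui A ⊠ ψ)) ⊠ idm K2) ∘ ψ2)
       ((ru A ⊠ (k ∘ lu K)) ∘ (k2 ⊠ idm (I ⊗ K)) ∘ br (I ⊗ K) K2)
       (stens (stens (idm I) ν) ν2).
Proof.
  intros H H2. unfold crep. rewrite (tensKI H). apply (compKI _ _ H2).
Qed.

Lemma CLval {A X K K2 : M} (k : hom K X) (k2 : hom K2 (A ⊗ I)) (o : hom I K) (o2 : hom I K2) :
  (ru A ⊠ (k ∘ lu K)) ∘ (k2 ⊠ idm (I ⊗ K)) ∘ br (I ⊗ K) K2 ∘ stens (stens (idm I) o) o2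
  = ((ru A ∘ k2 ∘ o2) ⊠ (k ∘ o)) ∘ lui I.
Proof.
  unfold stens. rw @br_nat. rewrite br_II, comp_idr. mg. rwr @lu_nat. rw @lu_lui.
  now rewrite comp_idr.
Qed.
End CL.

Unset Strict Implicit.

Section Ob.
Context {M : Markov}.
Notation I := (tunit (s := M)).

Lemma comp_tens_fun {A X : M} (F : ObsHom I X) (P : ObsHom I (A ⊗ I)) :
  ofun (ObsComp (ObsTens (ObsId A) F) P) =
  asc (A ⊗ X) (I ⊗ okey F) (okey P) ∘ ((shuf A I X (okey F) ∘ (rui A ⊠ ofun F)) ⊠ idm (okey P)) ∘ ofun P.
Proof. reflexivity. Qed.
Lemma comp_tens_obs {A X : M} (F : ObsHom I X) (P : ObsHom I (A ⊗ I)) :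
  oobs (ObsComp (ObsTens (ObsId A) F) P) = stens (stens (idm I) (oobs F)) (oobs P).
Proof. reflexivity. Qed.

Section WithPS.
Variable HC : has_conditionals M.
Variable PS : precise_supports M.

Lemma comp_crep {A X : M} (F : ObsHom I X) (P : ObsHom I (A ⊗ I)) k k2 :
  crep (ofun F) k (marg2 (ofun F)) -> crep (ofun P) k2 (marg2 (ofun P)) ->
  crep (ofun (ObsComp (ObsTens (ObsId A) F) P))
       ((ru A ⊠ (k ∘ lu (okey F))) ∘ (k2 ⊠ idm (I ⊗ okey F)) ∘ br (I ⊗ okey F) (okey P))
       (stens (stens (idm I) (marg2 (ofun F))) (marg2 (ofun P))).
Proof. intros H1 H2. rewrite comp_tens_fun. apply (CLraw H1 H2). Qed.

Lemma comp_ac {A X : M} (F : ObsHom I X) (P : ObsHom I (A ⊗ I)) k k2 :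
  isObs F -> isObs P ->
  crep (ofun F) k (marg2 (ofun F)) -> crep (ofun P) k2 (marg2 (ofun P)) ->
  (abs_cont (oobs (ObsComp (ObsTens (ObsId A) F) P)) (marg2 (ofun (ObsComp (ObsTens (ObsId A) F) P)))
   <-> abs_cont (oobs F) (marg2 (ofun F)) /\ abs_cont (oobs P) (marg2 (ofun P))).
Proof.
  intros D1 D2 H1 H2. rewrite (crep_marg2 (comp_crep H1 H2)), comp_tens_obs.
  rewrite (FPs PS _ _ (det_stens det_idm D1) D2).
  rewrite (FPs PS _ _ det_idm D1).
  split; intros; intuition (try apply ac_refl).
Qed.

Lemma approx_states {X : M} (F1 F2 : ObsHom I X) k1 k2 :
  isObs F1 -> isObs F2 ->
  crep (ofun F1) k1 (marg2 (ofun F1)) -> crep (ofun F2) k2 (marg2 (ofun F2)) ->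
  (abs_cont (oobs F1) (marg2 (ofun F1)) <-> abs_cont (oobs F2) (marg2 (ofun F2))) ->
  (abs_cont (oobs F1) (marg2 (ofun F1)) -> k1 ∘ oobs F1 = k2 ∘ oobs F2) ->
  approx F1 F2.
Proof.
  intros D1 D2 C1 C2 Eq V A P DP.
  destruct (crep_exists HC (ofun P)) as [kp CP].
  assert (E1 := comp_ac D1 DP C1 CP). assert (E2 := comp_ac D2 DP C2 CP).
  assert (R1 := comp_crep C1 CP). assert (R2 := comp_crep C2 CP).
  unfold sim, isFail.
  destruct (classic (abs_cont (oobs F1) (marg2 (ofun F1) ) /\ abs_cont (oobs P) (marg2 (ofun P)))) as [Y|N].
  - left. split; [apply E1; exact Y|]. split; [apply E2; intuition|].
    exists (((ru A ⊠ (k1 ∘ lu (okey F1))) ∘ (kp ⊠ idm (I ⊗ okey F1)) ∘ br (I ⊗ okey F1) (okey P)) ∘ ru _).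
    exists (((ru A ⊠ (k2 ∘ lu (okey F2))) ∘ (kp ⊠ idm (I ⊗ okey F2)) ∘ br (I ⊗ okey F2) (okey P)) ∘ ru _).
    split; [apply (crep2cond R1)|]. split; [apply (crep2cond R2)|].
    rw @ru_rui. rewrite comp_idr. rw @ru_rui. rewrite comp_idr. rewrite !comp_tens_obs.
    etransitivity; [apply CLval|]. symmetry. etransitivity; [apply CLval|]. rewrite (V (proj1 Y)). reflexivity.
  - right. split; intro H; apply N; [apply E1 in H | apply E2 in H]; intuition.
Qed.
End WithPS.
End Ob.

Unset Strict Implicit.

Section Fl.
Context {M : Markov}.
Notation I := (tunit (s := M)).

Lemma marg2_asc {Z Y KF KP : M} (f : hom Y (Z ⊗ KF)) (g : hom I (Y ⊗ KP)) :
  marg2 (asc Z KF KP ∘ (f ⊠ idm KP) ∘ g) = ((lu KF ∘ (del Z ⊠ idm KF) ∘ f) ⊠ idm KP) ∘ g.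
Proof.
  unfold marg2. rewrite <- (tensm_id KF KP). rwr @asc_nat. rw @kelly2.
  rewrite !tidr. nrm. reflexivity.
Qed.

Lemma pi2_stens {F K : M} (x : hom I F) (y : hom I K) : lu K ∘ (del F ⊠ idm K) ∘ stens x y = y.
Proof.
  unfold stens. rw @tc2. rewrite del_nat, del_I, comp_idl, tsl, tensm_id, comp_idl.
  rwr @lu_nat. rw @lu_lui. apply comp_idr.
Qed.

Lemma PY {F K Z : M} (x : hom I F) (y : hom I K) (a : hom K Z) :
  deterministic x -> deterministic y ->
  ((lu K ∘ (del F ⊠ idm K)) ⊠ idm Z) ∘ (idm (F ⊗ K) ⊠ (a ∘ lu K ∘ (del F ⊠ idm K))) ∘ copy (F ⊗ K) ∘ stens x y
  = (idm K ⊠ a) ∘ copy K ∘ y.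
Proof.
  intros Dx Dy. assert (D := det_stens Dx Dy). unfold deterministic in D, Dy.
  rewrite <- !comp_assoc, D, Dy. nrm. mg. nrm. rewrite ?pi2_stens. rw @pi2_stens. reflexivity.
Qed.

Lemma PK {F K Z : M} (q : hom K F) (a : hom K Z) :
  (idm (F ⊗ K) ⊠ (a ∘ lu K ∘ (del F ⊠ idm K))) ∘ copy (F ⊗ K) ∘ (q ⊠ idm K) ∘ copy K
  = (((q ⊠ idm K) ∘ copy K) ⊠ a) ∘ copy K.
Proof.
  rewrite copy_tens. nrm. rewrite !tidl. rewrite <- (tensm_id F K). rwr @shuf_nat. rewrite (tensm_id K K).
  rewrite (ctx2 (tc2 (copy F) (idm F ⊠ del F) (copy K) (idm (K ⊗ K)))). rw @counitr. rewrite comp_idl, (tsl (rui F) (copy K)). rewrite !tensm_id. rw @C7.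
  rw @tc2. rewrite comp_idl, comp_idr. rewrite (tsl q (copy K)). rewrite <- (tensm_id K K). rw @asci_nat.
  rewrite (tc2 (q ⊠ idm K) (idm (F ⊗ K)) (idm K) a).
  rewrite comp_idl, comp_idr. rwr (copy_coassoc K). rw @asci_asc. rewrite comp_idr.
  rewrite (tc2 (copy K) (q ⊠ idm K) (idm K) a). now rewrite comp_idr.
Qed.

Lemma FP2c {F K : M} (x : hom I F) (y : hom I K) (q : hom K F) (mu : hom I K) :
  deterministic x -> deterministic y ->
  abs_cont (stens x y) ((q ⊠ idm K) ∘ copy K ∘ mu) -> abs_cont y mu.
Proof.
  intros Dx Dy H Z a b E.
  assert (E' : as_eq ((q ⊠ idm K) ∘ copy K ∘ mu) (a ∘ lu K ∘ (del F ⊠ idm K)) (b ∘ lu K ∘ (del F ⊠ idm K))).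
  { unfold as_eq, pairing in *. rw @PK. rw @PK.
    rewrite (tsl ((q ⊠ idm K) ∘ copy K) a), (tsl ((q ⊠ idm K) ∘ copy K) b).
    rewrite <- !comp_assoc, (comp_assoc mu (copy K) (idm K ⊠ a)), (comp_assoc mu (copy K) (idm K ⊠ b)), E.
    reflexivity. }
  apply H in E'. unfold as_eq, pairing in *.
  rewrite <- (PY a Dx Dy), <- (PY b Dx Dy). rewrite <- !comp_assoc. f_equal. nrm. exact E'.
Qed.

Lemma stateI {K : M} (g : hom I (I ⊗ K)) : g = (idm I ⊠ marg2 g) ∘ lui I.
Proof.
  unfold marg2. rewrite del_I, tensm_id, comp_idr. rwr @lui_nat. rw @lui_lu. now rewrite comp_idl.
Qed.

Section H.
Variable HC : has_conditionals M.
Variable PS : precise_supports M.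

Lemma fail_comp {X Y : M} (P : ObsHom I X) (F : ObsHom X Y) :
  isObs P -> isObs F -> isFail P -> isFail (ObsComp F P).
Proof.
  unfold isFail, isObs. intros DP DF NP H. apply NP.
  destruct (crep_exists HC (ofun P)) as [k C].
  change (abs_cont (stens (oobs F) (oobs P))
    (marg2 (asc Y (okey F) (okey P) ∘ (ofun F ⊠ idm (okey P)) ∘ ofun P))) in H.
  rewrite marg2_asc in H. set (ν := marg2 (ofun P)) in *. rewrite C in H.
  nrmh H. rewrite tc2, comp_idl in H.
  exact (FP2c DF DP H).
Qed.

Lemma fail_comp2 {X : M} (P : ObsHom I X) (G : ObsHom I I) :
  isObs P -> isObs G -> isFail P -> isFail (ObsComp P G).
Proof.
  unfold isFail, isObs. intros DP DG NP H. apply NP.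
  change (abs_cont (stens (oobs P) (oobs G))
    (marg2 (asc X (okey P) (okey G) ∘ (ofun P ⊠ idm (okey G)) ∘ ofun G))) in H.
  rewrite marg2_asc in H. rewrite (stateI (ofun G)) in H.
  rewrite comp_assoc, tc2, comp_idl, comp_idr in H.
  change (abs_cont (stens (oobs P) (oobs G)) (stens (marg2 (ofun P)) (marg2 (ofun G)))) in H.
  apply (FPs PS _ _ DP DG) in H. apply H.
Qed.

Lemma fail_stens1 {X Y : M} (P : ObsHom I X) (Q : ObsHom I Y) :
  isObs P -> isObs Q ->
  abs_cont (oobs (ObsStens P Q)) (marg2 (ofun (ObsStens P Q))) ->
  abs_cont (oobs P) (marg2 (ofun P)) /\ abs_cont (oobs Q) (marg2 (ofun Q)).
Proof.
  unfold isObs. intros DP DQ H.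
  change (abs_cont (stens (stens (oobs P) (oobs Q)) (idm I))
    (marg2 (asc (X ⊗ Y) (okey P ⊗ okey Q) I ∘ ((shuf X (okey P) Y (okey Q) ∘ (ofun P ⊠ ofun Q)) ⊠ idm I)
      ∘ (rui (I ⊗ I) ∘ lui I)))) in H.
  rewrite marg2_asc in H. nrmh H. rewrite C8 in H. rewrite tc2 in H.
  rewrite <- comp_assoc in H.
  replace (rui (I ⊗ I) ∘ lui I) with ((lui I ⊠ idm I) ∘ lui I) in H by apply (tI_uniq (tI_tens tI_II tI_I)).
  rewrite comp_assoc, tc2, comp_idl in H.
  change (abs_cont (stens (stens (oobs P) (oobs Q)) (idm I))
    (stens (stens (marg2 (ofun P)) (marg2 (ofun Q))) (idm I))) in H.
  apply (FPs PS _ _ (det_stens DP DQ) det_idm) in H. destruct H as [H _].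
  apply (FPs PS _ _ DP DQ) in H. exact H.
Qed.

Lemma approx_refl {X : M} (F : ObsHom I X) : isObs F -> approx F F.
Proof.
  intro D. destruct (crep_exists HC (ofun F)) as [k C].
  apply (approx_states HC PS D D C C); tauto.
Qed.

Lemma approx_triv {X : M} (F1 F2 : ObsHom I X) :
  tI X -> tI (okey F1) -> tI (okey F2) -> isObs F1 -> isObs F2 -> approx F1 F2.
Proof.
  intros TX T1 T2 D1 D2. destruct TX as [e He].
  assert (TX : tI X) by (exists e; exact He).
  apply (approx_states HC PS (k1 := e ∘ del _) (k2 := e ∘ del _) D1 D2).
  - apply (tI_uniq (tI_tens TX T1)).
  - apply (tI_uniq (tI_tens TX T2)).
  - split; intros _; apply ac_tI; assumption.
  - intros _. apply (tI_uniq TX).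
Qed.
End H.
End Fl.

Unset Strict Implicit.

Lemma part1 (M : Markov) (HC : has_conditionals M) (PS : precise_supports M) :
  forall (X : M) (P Q : ObsHom tunit X),
      isObs P -> isObs Q -> isFail P -> isFail Q -> approx P Q.
Proof.
  intros X P Q DP DQ FP FQ.
  destruct (crep_exists HC (ofun P)) as [k1 C1]; destruct (crep_exists HC (ofun Q)) as [k2 C2].
  apply (approx_states HC PS DP DQ C1 C2).
  - unfold isFail in *; tauto.
  - intro H; contradiction.
Qed.

Theorem proposition5p12 (M : Markov) :
  has_conditionals M -> precise_supports M ->
  (exists (A : M) (mu o : hom tunit A), deterministic o /\ ~ abs_cont o mu) ->
  (forall (X : M) (P Q : ObsHom tunit X),
      isObs P -> isObs Q -> isFail P -> isFail Q -> approx P Q) /\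
  (forall (X : M) (P : ObsHom tunit X) (h : hom (okey P ⊗ tunit) X),
      isObs P -> abs_cont (oobs P) (marg2 (ofun P)) -> cond_second (ofun P) h ->
      approx P (ObsJ (h ∘ rui (okey P) ∘ oobs P))) /\
  (forall (X Y : M) (P : ObsHom tunit X) (F : ObsHom X Y),
      isObs P -> isObs F -> isFail P -> IsFailure (ObsComp F P)) /\
  (forall (X : M) (P : ObsHom tunit X) (G : ObsHom tunit tunit),
      isObs P -> isObs G -> isFail P -> IsFailure (ObsComp P G)) /\
  (forall (X Y : M) (P : ObsHom tunit X) (Q : ObsHom tunit Y),
      isObs P -> isObs Q -> isFail P ->
      IsFailure (ObsStens P Q) /\ IsFailure (ObsStens Q P)) /\
  ((forall F : ObsHom (tunit (s := M)) tunit,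
      isObs F -> approx F (ObsId tunit) \/ IsFailure F) /\
   (exists B : ObsHom (tunit (s := M)) tunit, isObs B /\ isFail B) /\
   ObsCopyable (ObsId (tunit (s := M))) /\
   (forall B : ObsHom (tunit (s := M)) tunit,
      isObs B -> isFail B -> ObsCopyable B /\ ~ ObsDiscardable B)).
Proof.
  intros HC PS [A0 [mu0 [o0 [Do0 No0]]]].
  split; [apply (part1 HC PS)|].
  split.
  { intros X P h DP AP CH.
    assert (C1 := cond2crep CH). assert (E := crep_marg2 C1). rewrite <- E in C1.
    apply (approx_states HC PS (F2 := ObsJ (h ∘ rui (okey P) ∘ oobs P)) (k1 := h ∘ rui (okey P)) (k2 := h ∘ rui (okey P) ∘ oobs P) DP det_idm C1).
    - unfold crep. simpl. replace (marg2 (rui X ∘ (h ∘ rui (okey P) ∘ oobs P))) with (idm (tunit (s := M)))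
        by apply term.
      rewrite comp_idr, copy_I, <- rui_lui_I. apply rui_nat.
    - split; intros _; [apply ac_tI, tI_I | exact AP].
    - intros _. simpl. rewrite comp_idr. reflexivity. }
  split.
  { intros X Y P F DP DF FP. exists (ObsComp F P).
    assert (D : isObs (ObsComp F P)) by (apply det_stens; assumption).
    split; [exact D|]. split; [apply (fail_comp HC); assumption|]. apply (approx_refl HC PS D). }
  split.
  { intros X P G DP DG FP. exists (ObsComp P G).
    assert (D : isObs (ObsComp P G)) by (apply det_stens; assumption).
    split; [exact D|]. split; [apply (fail_comp2 PS); assumption|]. apply (approx_refl HC PS D). }
  split.
  { intros X Y P Q DP DQ FP. split.
    - exists (ObsStens P Q).
      assert (D : isObs (ObsStens P Q)) by (apply det_stens; [apply det_stens|apply det_idm]; assumption).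
      split; [exact D|]. split; [|apply (approx_refl HC PS D)].
      intro H. apply FP. apply (fail_stens1 PS DP DQ H).
    - exists (ObsStens Q P).
      assert (D : isObs (ObsStens Q P)) by (apply det_stens; [apply det_stens|apply det_idm]; assumption).
      split; [exact D|]. split; [|apply (approx_refl HC PS D)].
      intro H. apply FP. apply (fail_stens1 PS DQ DP H). }
  split.
  { intros F DF. destruct (classic (abs_cont (oobs F) (marg2 (ofun F)))) as [Y|N].
    - left. destruct (crep_exists HC (ofun F)) as [k C].
      apply (approx_states HC PS (F2 := ObsId tunit) (k2 := idm tunit) DF det_idm C).
      + apply II_uniq.
      + split; intros _; [apply ac_tI, tI_I | exact Y].
      + intros _. apply term.
    - right. exists F. split; [exact DF|]. split; [exact N|]. apply (approx_refl HC PS DF). }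
  split.
  { exists {| okey := A0; ofun := lui A0 ∘ mu0; oobs := o0 |}. split; [exact Do0|].
    unfold isFail; simpl. replace (marg2 (lui A0 ∘ mu0)) with mu0; [exact No0|].
    unfold marg2. rewrite del_I, tensm_id, comp_idr. rw @lu_lui. now rewrite comp_idl. }
  split.
  { unfold ObsCopyable. apply (approx_triv HC PS); simpl;
      repeat (apply tI_tens); try apply tI_I; apply det_stens; try apply det_stens; apply det_idm. }
  intros B DB FB. split.
  - unfold ObsCopyable. apply (part1 HC PS).
    + apply det_stens; [apply det_idm | exact DB].
    + apply det_stens; [apply det_stens; exact DB | apply det_idm].
    + apply (fail_comp HC); [exact DB | apply det_idm | exact FB].
    + rewrite copy_I. intro H. apply FB. apply (fail_stens1 PS DB DB H).
  - unfold ObsDiscardable. intro H.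
    specialize (H tunit (ObsJ (lui tunit)) det_idm).
    destruct (crep_exists HC (ofun (ObsComp (ObsJ (del tunit)) B))) as [k1 C1].
    destruct (crep_exists HC (ofun (ObsJ (del (tunit (s := M)))))) as [k2 C2].
    destruct (crep_exists HC (ofun (ObsJ (lui (tunit (s := M)))))) as [k3 C3].
    assert (D1 : isObs (ObsComp (ObsJ (del tunit)) B)) by (apply det_stens; [apply det_idm | exact DB]).
    assert (F1 : isFail (ObsComp (ObsJ (del tunit)) B)) by (apply (fail_comp HC); [exact DB | apply det_idm | exact FB]).
    assert (E1 := comp_ac PS (P := ObsJ (lui tunit)) D1 det_idm C1 C3).
    assert (E2 := comp_ac PS (F := ObsJ (del tunit)) (P := ObsJ (lui tunit)) det_idm det_idm C2 C3).
    destruct H as [[H1 _] | [_ H2]].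
    + apply E1 in H1. destruct H1 as [H1 _]. exact (F1 H1).
    + apply H2. apply E2. split; apply ac_tI, tI_I.
Qed.
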